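(* Let $D$ be a digraph without parallel edges, let $X\subseteq E(D)$, let $S$ be a set with $|S|=k$, and let $\lambda_1:E(D)\setminus X\to S$ and $\lambda_2:X\to S$. If $(E(D)\setminus X, X)$, viewed as a partition of the vertex set of $\vec{L}(D)$, is $(\lambda_1,\lambda_2)$-consistent in $\vec{L}(D)$, then $|S^V_X|\le 4k$.
   Context: All digraphs are finite and loopless. The directed line graph $\vec{L}(D)$ has vertex set $E(D)$ and an edge $\vec{ef}$ whenever $e=\vec{wx}$ and $f=\vec{xy}$ for some vertices $w,x,y$ of $D$. For $X\subseteq E(D)$, $S^V_X=\{y\in V(D): \exists x,z \text{ with } \vec{xy}\in E(D)\setminus X \text{ and } \vec{yz}\in X\}$. For a digraph $H$, a partition $(A,B)$ of $V(H)$ and functions $\lambda_A:A\to S$, $\lambda_B:B\to S$, $(A,B)$ is $(\lambda_A,\lambda_B)$-consistent if (i) for all $a_1,a_2\in A$ with $\lambda_A(a_1)=\lambda_A(a_2)$ and all $b\in B$: $\vec{a_1b}\in E(H)$ iff $\vec{a_2b}\in E(H)$; and (ii) for all $b_1,b_2\in B$ with $\lambda_B(b_1)=\lambda_B(b_2)$ and all $a\in A$: $\vec{ab_1}\in E(H)$ iff $\vec{ab_2}\in E(H)$. *)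

(* Defs.v *)
From mathcomp Require Import all_boot.
Set Implicit Arguments. Unset Strict Implicit. Unset Printing Implicit Defensive.

(* A finite digraph without parallel edges on the vertex type V is given by
   its edge relation [e : rel V]; the edge set E(D) is the set of ordered
   pairs (x, y) with [e x y].  Looplessness is [irreflexive e]. *)

Definition edges (V : finType) (e : rel V) : {set V * V} :=
  [set p | e p.1 p.2].

Definition line_adj (V : finType) (e : rel V) : rel (V * V) :=
  fun p q => [&& e p.1 p.2, e q.1 q.2 & p.2 == q.1].

Definition SVX (V : finType) (e : rel V) (X : {set V * V}) : {set V} :=
  [set y | [exists x, exists z,
     ((x, y) \in edges e :\: X) && ((y, z) \in X)]].

(* (A,B) is (lA,lB)-consistent in the digraph H with vertex type T and
   adjacency relation adjH.  The labelling functions are total functions,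
   but only their values on A (resp. B) are ever used. *)
Definition consistent (T S : Type) (adjH : rel T) (A B : pred T)
  (lA lB : T -> S) : Prop :=
  (forall a1 a2 b, a1 \in A -> a2 \in A -> b \in B -> lA a1 = lA a2 ->
     adjH a1 b = adjH a2 b) /\
  (forall b1 b2 a, b1 \in B -> b2 \in B -> a \in A -> lB b1 = lB b2 ->
     adjH a b1 = adjH a b2).

(* Main.v *)
Require Import Defs.
From mathcomp Require Import all_boot.

Theorem mainTheorem3 (V : finType) (e : rel V) (X : {set V * V})
  (S : finType) (k : nat) (lam1 lam2 : V * V -> S) :
  irreflexive e ->
  X \subset edges e ->
  #|S| = k ->
  consistent (line_adj e) (mem (edges e :\: X)) (mem X) lam1 lam2 ->
  #|SVX e X| <= 4 * k.
Proof.
move=> _ sXE cardS [c1 _].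
pose f (y : V) := if [pick x | (x, y) \in edges e :\: X] is Some x
                  then lam1 (x, y) else lam1 (y, y).
have inj : {in SVX e X &, injective f}.
  move=> y y'; rewrite !inE => /existsP[x /existsP[z /andP[ax bz]]].
  move=> /existsP[x' /existsP[z' /andP[ax' _]]].
  rewrite /f.
  case: pickP => [u hu|/(_ x)]; last by rewrite ax.
  case: pickP => [u' hu'|/(_ x')]; last by rewrite ax'.
  move=> eq.
  have := c1 (u, y) (u', y') (y, z) hu hu' bz eq.
  have bE : (y, z) \in edges e by apply: (subsetP sXE).
  move: hu hu' bE; rewrite !inE /line_adj /= => /andP[_ ->] /andP[_ ->] ->.
  by rewrite eqxx /= => /esym /eqP.
rewrite -(card_in_imset inj).
apply: leq_trans (max_card _) _; rewrite cardS.
by rewrite leq_pmull.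
Qed.
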